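(* Assume A2. Let $0w1$ be a valid word (with $w$ a possibly empty word). Then for $x\in\mathcal I$: $0w1$ is the $x$-threshold word if and only if $x\in[y_{01w},y_{10w}]$. Moreover, if $x\in\mathcal I$ and $x\ge y_0$, then the $x$-threshold word is $0$; if $x\in\mathcal I$ and $x\le y_1$, then the $x$-threshold word is $1$.
   Context: Words are finite strings over $\{0,1\}$; $\epsilon$ is the empty word, $w^\omega$ the infinite repetition of $w$. Let $\mathcal I\subseteq\mathbb R$ be an interval and $\phi_0,\phi_1:\mathcal I\to\mathcal I$. For a word $w$ put $\phi_w:=\phi_{w_{|w|}}\circ\cdots\circ\phi_{w_1}$ (first letter applied first), $\phi_\epsilon=\mathrm{id}$. Assumption A2: for all $x<y$ in $\mathcal I$ and $k\in\{0,1\}$, $\phi_k(x)<\phi_k(y)$ and $\phi_k(y)-\phi_k(x)<y-x$; moreover $\phi_0,\phi_1$ have fixed points $y_0,y_1\in\mathcal I$ with $y_1<y_0$. Under A2, for every non-empty word $u$ the map $\phi_u$ has a unique fixed point in $\mathcal I$, denoted $y_u$. The $x$-threshold orbit is the sequence $(x_k)_{k\ge1}$ with $x_1=\phi_1(x)$ and $x_{k+1}=\phi_1(x_k)$ if $x_k\ge x$, $x_{k+1}=\phi_0(x_k)$ if $x_k<x$. The $x$-threshold word is the shortest non-empty finite word $\pi$ such that $x_{k+1}=\phi_{(\pi^\omega)_k}(x_k)$ for all $k\ge1$, when such a word exists. For $p\ge1$, $L_p,R_p$ are the word morphisms determined by $L_p(0)=0^{p+1}1$, $L_p(1)=0^p1$,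 $R_p(0)=01^p$, $R_p(1)=01^{p+1}$. The set of valid words is the smallest set of words containing $0$ and $1$ and closed under $L_p$ and $R_p$ for all $p\ge1$; every valid word other than $0,1$ has the form $0w1$. *)

(* Defs.v *)
From Stdlib Require Import Reals List Arith.
Import ListNotations.
Open Scope R_scope.

(* Words over {0,1}: false = letter 0, true = letter 1. *)
Definition word := list bool.

Definition phik (phi0 phi1 : R -> R) (b : bool) : R -> R :=
  if b then phi1 else phi0.

(* phi_w = phi_{w_|w|} o ... o phi_{w_1}: first letter applied first. *)
Definition phiw (phi0 phi1 : R -> R) (w : word) (x : R) : R :=
  fold_left (fun acc b => phik phi0 phi1 b acc) w x.

Definition is_interval (I : R -> Prop) : Prop :=
  forall a b c, I a -> I c -> a <= b -> b <= c -> I b.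

Definition A2 (I : R -> Prop) (phi0 phi1 : R -> R) (y0 y1 : R) : Prop :=
  (forall k x, I x -> I (phik phi0 phi1 k x)) /\
  (forall k x y, I x -> I y -> x < y ->
      phik phi0 phi1 k x < phik phi0 phi1 k y /\
      phik phi0 phi1 k y - phik phi0 phi1 k x < y - x) /\
  I y0 /\ phi0 y0 = y0 /\ I y1 /\ phi1 y1 = y1 /\ y1 < y0.

Definition is_fixpt (I : R -> Prop) (phi0 phi1 : R -> R) (u : word) (y : R) : Prop :=
  I y /\ phiw phi0 phi1 u y = y.

(* x-threshold orbit: orbit n = x_{n+1}; x_1 = phi_1 x,
   x_{k+1} = phi_1 x_k if x_k >= x, phi_0 x_k if x_k < x. *)
Fixpoint orbit (phi0 phi1 : R -> R) (x : R) (n : nat) : R :=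
  match n with
  | O => phi1 x
  | S m => let xm := orbit phi0 phi1 x m in
           if Rle_dec x xm then phi1 xm else phi0 xm
  end.

(* (pi^omega)_k for k >= 1 is nth ((k-1) mod |pi|) pi;
   the condition x_{k+1} = phi_{(pi^omega)_k}(x_k) for all k >= 1. *)
Definition follows (phi0 phi1 : R -> R) (x : R) (pi : word) : Prop :=
  forall n : nat,
    orbit phi0 phi1 x (S n) =
    phik phi0 phi1 (nth (Nat.modulo n (length pi)) pi false) (orbit phi0 phi1 x n).

Definition threshold_word (phi0 phi1 : R -> R) (x : R) (pi : word) : Prop :=
  pi <> [] /\ follows phi0 phi1 x pi /\
  (forall pi', pi' <> [] -> follows phi0 phi1 x pi' -> (length pi <= length pi')%nat).

Definition Lp_letter (p : nat) (b : bool) : word :=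
  if b then repeat false p ++ [true] else repeat false (S p) ++ [true].
Definition Rp_letter (p : nat) (b : bool) : word :=
  if b then false :: repeat true (S p) else false :: repeat true p.
Definition Lp (p : nat) (w : word) : word := flat_map (Lp_letter p) w.
Definition Rp (p : nat) (w : word) : word := flat_map (Rp_letter p) w.

Inductive valid : word -> Prop :=
  | valid0 : valid [false]
  | valid1 : valid [true]
  | validL : forall p w, (1 <= p)%nat -> valid w -> valid (Lp p w)
  | validR : forall p w, (1 <= p)%nat -> valid w -> valid (Rp p w).

(* Main.v *)
Require Import Defs.
From Stdlib Require Import Reals List Lra Lia Arith Bool.
Import ListNotations.
Open Scope R_scope.

Lemma phiw_app p0 p1 u v x : phiw p0 p1 (u ++ v) x = phiw p0 p1 v (phiw p0 p1 u x).
Proof. unfold phiw. now rewrite fold_left_app. Qed.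

Lemma phiw_cons p0 p1 c u x : phiw p0 p1 (c :: u) x = phiw p0 p1 u (phik p0 p1 c x).
Proof. reflexivity. Qed.

Lemma phiw_nil p0 p1 x : phiw p0 p1 [] x = x.
Proof. reflexivity. Qed.

Lemma phiw_one p0 p1 c x : phiw p0 p1 [c] x = phik p0 p1 c x.
Proof. reflexivity. Qed.

Section Basic.
#[local] Set Default Proof Using "All".
Variables (I : R -> Prop) (phi0 phi1 : R -> R) (y0 y1 : R).
Hypothesis HI : is_interval I.
Hypothesis HA : A2 I phi0 phi1 y0 y1.

Notation f := (phik phi0 phi1).
Notation P := (phiw phi0 phi1).

Lemma f_in c x : I x -> I (f c x).
Proof. destruct HA as [H _]. auto. Qed.

Lemma f_lt c x y : I x -> I y -> x < y -> f c x < f c y.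
Proof. destruct HA as [_ [H _]]. intros. apply H; auto. Qed.

Lemma f_contr c x y : I x -> I y -> x < y -> f c y - f c x < y - x.
Proof. destruct HA as [_ [H _]]. intros. apply H; auto. Qed.

Lemma P_in u x : I x -> I (P u x).
Proof. revert x; induction u; intros; simpl; auto. apply IHu, f_in; auto. Qed.

Lemma P_lt u x y : I x -> I y -> x < y -> P u x < P u y.
Proof. revert x y; induction u; intros; simpl; auto.
  apply IHu; try apply f_in; auto. apply f_lt; auto. Qed.

Lemma P_le u x y : I x -> I y -> x <= y -> P u x <= P u y.
Proof. intros. destruct H1. left; apply P_lt; auto. subst; lra. Qed.

Lemma P_rev_le u x y : I x -> I y -> P u x <= P u y -> x <= y.
Proof. intros. destruct (Rle_lt_dec x y); auto.
  pose proof (P_lt u y x H0 H r). lra. Qed.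

Lemma P_contr_le u x y : I x -> I y -> x <= y -> P u y - P u x <= y - x.
Proof. revert x y; induction u; intros; simpl. lra.
  destruct H1. pose proof (f_contr a x y H H0 H1).
  pose proof (f_lt a x y H H0 H1).
  pose proof (IHu (f a x) (f a y) (f_in _ _ H) (f_in _ _ H0) ltac:(lra)). lra.
  subst. lra. Qed.

Lemma P_contr_lt u x y : u <> [] -> I x -> I y -> x < y -> P u y - P u x < y - x.
Proof. destruct u as [|c u]. intuition. intros _ Hx Hy Hxy. simpl.
  pose proof (f_contr c x y Hx Hy Hxy).
  pose proof (f_lt c x y Hx Hy Hxy).
  pose proof (P_contr_le u (f c x) (f c y) (f_in _ _ Hx) (f_in _ _ Hy) ltac:(lra)). lra. Qed.

Lemma fix_unique u a a' : u <> [] -> I a -> I a' -> P u a = a -> P u a' = a' -> a = a'.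
Proof. intros. destruct (Rtotal_order a a') as [H4|[H4|H4]]; auto.
  pose proof (P_contr_lt u a a' H H0 H1 H4). lra.
  pose proof (P_contr_lt u a' a H H1 H0 H4). lra. Qed.

Lemma below_fix u x b : u <> [] -> I x -> I b -> P u b = b -> x <= P u x -> x <= b.
Proof. intros. destruct (Rle_lt_dec x b); auto.
  pose proof (P_contr_lt u b x H H1 H0 r). lra. Qed.

Lemma above_fix u x b : u <> [] -> I x -> I b -> P u b = b -> x > b -> P u x < x.
Proof. intros. pose proof (P_contr_lt u b x H H1 H0 H3). lra. Qed.

Lemma I_y0 : I y0. Proof. destruct HA as [_ [_ [H _]]]. auto. Qed.
Lemma I_y1 : I y1. Proof. destruct HA as [_ [_ [_ [_ [H _]]]]]. auto. Qed.
Lemma fix0 : phi0 y0 = y0. Proof. destruct HA as [_ [_ [_ [H _]]]]. auto. Qed.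
Lemma fix1 : phi1 y1 = y1. Proof. destruct HA as [_ [_ [_ [_ [_ [H _]]]]]]. auto. Qed.
Lemma y1y0 : y1 < y0. Proof. destruct HA as [_ [_ [_ [_ [_ [_ H]]]]]]. auto. Qed.

Definition J z := y1 <= z <= y0.

Lemma J_I z : J z -> I z.
Proof. intros [H1 H2]. apply (HI y1 z y0); auto using I_y1, I_y0. Qed.

Lemma phi0_ge z : I z -> z <= y0 -> z <= phi0 z.
Proof. intros. destruct H0. pose proof (f_contr false z y0 H I_y0 H0). simpl in H1.
  rewrite fix0 in H1. lra. rewrite H0, fix0. lra. Qed.
Lemma phi0_gt z : I z -> z < y0 -> z < phi0 z.
Proof. intros. pose proof (f_contr false z y0 H I_y0 H0). simpl in H1.
  rewrite fix0 in H1. lra. Qed.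
Lemma phi1_le z : I z -> y1 <= z -> phi1 z <= z.
Proof. intros. destruct H0. pose proof (f_contr true y1 z I_y1 H H0). simpl in H1.
  rewrite fix1 in H1. lra. rewrite <- H0, fix1. lra. Qed.
Lemma phi1_lt z : I z -> y1 < z -> phi1 z < z.
Proof. intros. pose proof (f_contr true y1 z I_y1 H H0). simpl in H1.
  rewrite fix1 in H1. lra. Qed.

Lemma phi0_J z : J z -> J (phi0 z).
Proof. intros HJ. pose proof (J_I z HJ). destruct HJ. split.
  pose proof (phi0_ge z H H1). lra.
  pose proof (P_le [false] z y0 H I_y0 H1). simpl in H2. rewrite fix0 in H2. lra. Qed.
Lemma phi1_J z : J z -> J (phi1 z).
Proof. intros HJ. pose proof (J_I z HJ). destruct HJ. split.
  pose proof (P_le [true] y1 z I_y1 H H0). simpl in H2. rewrite fix1 in H2. lra.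
  pose proof (phi1_le z H H0). lra. Qed.
Lemma f_J c z : J z -> J (f c z).
Proof. destruct c; simpl; auto using phi0_J, phi1_J. Qed.
Lemma P_J u z : J z -> J (P u z).
Proof. revert z; induction u; simpl; auto. intros. apply IHu, f_J; auto. Qed.

Lemma phi0_ne_phi1 z : J z -> phi0 z <> phi1 z.
Proof. intros HJ. pose proof (J_I z HJ). destruct HJ.
  destruct (Rle_lt_dec z y1).
  - assert (z = y1) by lra. rewrite H2, fix1. rewrite H2 in H. pose proof (phi0_gt y1 H y1y0). lra.
  - pose proof (phi1_lt z H r). pose proof (phi0_ge z H H1). lra. Qed.

Lemma above_y0_dec u z t : y0 < z -> I t -> t < z -> P u t < z.
Proof. revert t; induction u; intros; simpl; auto.
  apply IHu; auto. apply f_in; auto.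
  destruct (Rle_lt_dec t y0).
  - pose proof (P_le [a] t y0 H0 I_y0 r). simpl in H2.
    destruct a; simpl in *. pose proof (phi1_lt y0 I_y0 y1y0). lra. rewrite fix0 in H2. lra.
  - destruct a. pose proof (phi1_lt t H0 ltac:(pose proof y1y0; lra)). simpl. lra.
    pose proof (f_contr false y0 t I_y0 H0 r). simpl in *. rewrite fix0 in H2. lra. Qed.

Lemma below_y1_inc u z t : z < y1 -> I t -> z < t -> z < P u t.
Proof. revert t; induction u; intros; simpl; auto.
  apply IHu; auto. apply f_in; auto.
  destruct (Rle_lt_dec y1 t).
  - pose proof (P_le [a] y1 t I_y1 H0 r). simpl in H2.
    destruct a; simpl in *. rewrite fix1 in H2. lra. pose proof (phi0_gt y1 I_y1 y1y0). lra.
  - destruct a.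
    pose proof (f_contr true t y1 H0 I_y1 r). simpl in *. rewrite fix1 in H2. lra.
    pose proof (phi0_gt t H0 ltac:(pose proof y1y0; lra)). simpl. lra. Qed.

Lemma fix_J u b : u <> [] -> I b -> P u b = b -> J b.
Proof. intros Hu Hb Hf. destruct u as [|c u]. intuition. split.
  - destruct (Rle_lt_dec y1 b); auto. exfalso.
    assert (b < f c b).
    { destruct c; simpl.
      pose proof (f_contr true b y1 Hb I_y1 r). simpl in H. rewrite fix1 in H. lra.
      pose proof (phi0_gt b Hb ltac:(pose proof y1y0; lra)). lra. }
    pose proof (below_y1_inc u b (f c b) r (f_in _ _ Hb) H). simpl in Hf. lra.
  - destruct (Rle_lt_dec b y0); auto. exfalso.
    assert (f c b < b).
    { destruct c; simpl.
      pose proof (phi1_lt b Hb ltac:(pose proof y1y0; lra)). lra.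
      pose proof (f_contr false y0 b I_y0 Hb r). simpl in H. rewrite fix0 in H. lra. }
    pose proof (above_y0_dec u b (f c b) r (f_in _ _ Hb) H). simpl in Hf. lra. Qed.

Lemma rep0_mono i j z : J z -> (i <= j)%nat -> P (repeat false i) z <= P (repeat false j) z.
Proof. intros HJ Hij. induction Hij. lra.
  replace (repeat false (S m)) with (repeat false m ++ [false]).
  rewrite phiw_app. simpl. pose proof (P_J (repeat false m) z HJ).
  pose proof (phi0_ge _ (J_I _ H) (proj2 H)). lra.
  clear. induction m; simpl; auto. now rewrite IHm. Qed.

Lemma rep1_mono i j z : J z -> (i <= j)%nat -> P (repeat true j) z <= P (repeat true i) z.
Proof. intros HJ Hij. induction Hij. lra.
  replace (repeat true (S m)) with (repeat true m ++ [true]).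
  rewrite phiw_app. simpl. pose proof (P_J (repeat true m) z HJ).
  pose proof (phi1_le _ (J_I _ H) (proj1 H)). lra.
  clear. induction m; simpl; auto. now rewrite IHm. Qed.

End Basic.

Lemma lip_cont (F : R -> R) (K : R) : 0 < K -> (forall x y, Rabs (F x - F y) <= K * Rabs (x - y)) -> continuity F.
Proof. intros HK H x. unfold continuity_pt, continue_in, limit1_in, limit_in.
  intros eps Heps. exists (eps / K). split. apply Rdiv_lt_0_compat; auto.
  intros y [_ Hy]. simpl in *. unfold R_dist in *.
  eapply Rle_lt_trans. apply H.
  apply Rmult_lt_compat_l with (r := K) in Hy; auto.
  replace (K * (eps / K)) with eps in Hy by (field; lra). lra. Qed.

Section Fix.
#[local] Set Default Proof Using "All".
Variables (I : R -> Prop) (phi0 phi1 : R -> R) (y0 y1 : R).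
Hypothesis HI : is_interval I.
Hypothesis HA : A2 I phi0 phi1 y0 y1.
Notation P := (phiw phi0 phi1).

Lemma P_lip u x y : I x -> I y -> Rabs (P u x - P u y) <= Rabs (x - y).
Proof. intros. destruct (Rle_lt_dec x y).
  - pose proof (P_contr_le I phi0 phi1 y0 y1 HI HA u x y H H0 r).
    pose proof (P_le I phi0 phi1 y0 y1 HI HA u x y H H0 r).
    rewrite !Rabs_left1; lra.
  - pose proof (P_contr_le I phi0 phi1 y0 y1 HI HA u y x H0 H ltac:(lra)).
    pose proof (P_le I phi0 phi1 y0 y1 HI HA u y x H0 H ltac:(lra)).
    rewrite !Rabs_right; lra. Qed.

Lemma exists_fix u : u <> [] -> exists z, J y0 y1 z /\ P u z = z.
Proof. intros Hu.
  pose proof (y1y0 I phi0 phi1 y0 y1 HI HA) as Hy.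
  set (cl := fun z => Rmax y1 (Rmin y0 z)).
  assert (Hcl : forall z, J y0 y1 (cl z)).
  { intros z. unfold cl, J, Rmax, Rmin. repeat destruct Rle_dec; lra. }
  assert (Hcll : forall x y, Rabs (cl x - cl y) <= Rabs (x - y)).
  { intros x y. unfold cl, Rmax, Rmin. repeat destruct Rle_dec;
    unfold Rabs; repeat destruct Rcase_abs; lra. }
  set (F := fun z => P u (cl z) - cl z).
  assert (HF : continuity F).
  { apply (lip_cont F 2). lra. intros x y. unfold F.
    pose proof (P_lip u (cl x) (cl y) (J_I I phi0 phi1 y0 y1 HI HA _ (Hcl x)) (J_I I phi0 phi1 y0 y1 HI HA _ (Hcl y))).
    pose proof (Hcll x y).
    replace (P u (cl x) - cl x - (P u (cl y) - cl y)) with ((P u (cl x) - P u (cl y)) - (cl x - cl y)) by ring.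
    eapply Rle_trans. apply Rabs_triang_inv2 || apply Rabs_triang. 
    rewrite Rabs_Ropp. lra. }
  assert (cl y1 = y1) by (unfold cl, Rmax, Rmin; repeat destruct Rle_dec; lra).
  assert (cl y0 = y0) by (unfold cl, Rmax, Rmin; repeat destruct Rle_dec; lra).
  assert (F y1 * F y0 <= 0).
  { unfold F. rewrite H, H0.
    pose proof (P_J I phi0 phi1 y0 y1 HI HA u y1 ltac:(unfold J; lra)).
    pose proof (P_J I phi0 phi1 y0 y1 HI HA u y0 ltac:(unfold J; lra)).
    unfold J in *. apply Rmult_le_0_l_rev || (assert (0 <= P u y1 - y1) by lra; assert (P u y0 - y0 <= 0) by lra; nra). }
  destruct (IVT_cor F y1 y0 HF ltac:(lra) H1) as [z [Hz Hz0]].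
  exists z. assert (cl z = z) by (unfold cl, Rmax, Rmin; repeat destruct Rle_dec; lra).
  unfold F in Hz0. rewrite H2 in Hz0. split. unfold J; lra. lra. Qed.
End Fix.

Lemma phiw_flat p0 p1 (g : bool -> word) u x :
  phiw (phiw p0 p1 (g false)) (phiw p0 p1 (g true)) u x = phiw p0 p1 (flat_map g u) x.
Proof. revert x; induction u as [|c u IH]; intros; simpl. reflexivity.
  rewrite phiw_app, <- IH. destruct c; reflexivity. Qed.

Lemma phik_flat p0 p1 (g : bool -> word) c x :
  phik (phiw p0 p1 (g false)) (phiw p0 p1 (g true)) c x = phiw p0 p1 (g c) x.
Proof. destruct c; reflexivity. Qed.

Section Derived.
#[local] Set Default Proof Using "All".
Variables (I : R -> Prop) (phi0 phi1 : R -> R) (y0 y1 : R).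
Hypothesis HI : is_interval I.
Hypothesis HA : A2 I phi0 phi1 y0 y1.
Notation P := (phiw phi0 phi1).

Lemma A2_derived (g : bool -> word) z0 z1 : (forall c, g c <> []) ->
  I z0 -> I z1 -> P (g false) z0 = z0 -> P (g true) z1 = z1 -> z1 < z0 ->
  A2 I (P (g false)) (P (g true)) z0 z1.
Proof. intros Hg H0 H1 F0 F1 Hlt.
  refine (conj _ (conj _ (conj H0 (conj F0 (conj H1 (conj F1 Hlt)))))).
  - intros c ? ?. rewrite phik_flat. apply (P_in I phi0 phi1 y0 y1 HI HA); auto.
  - intros c ? ? ? ? ?. rewrite !phik_flat. split.
    apply (P_lt I phi0 phi1 y0 y1 HI HA); auto.
    apply (P_contr_lt I phi0 phi1 y0 y1 HI HA); auto.
Qed.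

Lemma fix_order (g0 g1 : word) (h : R -> R) z0 z1 :
  g0 <> [] -> g1 <> [] -> I z0 -> I z1 -> P g0 z0 = z0 -> P g1 z1 = z1 ->
  (forall z, J y0 y1 z -> P g1 z <= P g0 z) -> J y0 y1 z0 -> z1 <= z0.
Proof. intros. destruct (Rle_lt_dec z1 z0); auto.
  pose proof (P_contr_lt I phi0 phi1 y0 y1 HI HA g1 z0 z1 H0 H1 H2 r).
  pose proof (H5 z0 H6). lra. Qed.

Lemma P_inj u x y : I x -> I y -> P u x = P u y -> x = y.
Proof. intros. apply Rle_antisym; apply (P_rev_le I phi0 phi1 y0 y1 HI HA u); auto; lra. Qed.

Lemma Lletter_nonempty q c : (1 <= q)%nat -> Lp_letter q c <> [].
Proof. intros. destruct c; simpl; destruct q; simpl; try lia; discriminate. Qed.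

Lemma Rletter_nonempty q c : Rp_letter q c <> [].
Proof. destruct c; simpl; discriminate. Qed.

Lemma P_rep0_y0 k : P (repeat false k) y0 = y0.
Proof. induction k; simpl; auto. rewrite (fix0 I phi0 phi1 y0 y1 HI HA). auto. Qed.
Lemma P_rep1_y1 k : P (repeat true k) y1 = y1.
Proof. induction k; simpl; auto. rewrite (fix1 I phi0 phi1 y0 y1 HI HA). auto. Qed.

Lemma A2_L q : (1 <= q)%nat -> exists z0 z1,
  A2 I (P (Lp_letter q false)) (P (Lp_letter q true)) z0 z1.
Proof. intros Hq.
  destruct (exists_fix I phi0 phi1 y0 y1 HI HA (Lp_letter q false) (Lletter_nonempty q false Hq)) as [z0 [J0 F0]].
  destruct (exists_fix I phi0 phi1 y0 y1 HI HA (Lp_letter q true) (Lletter_nonempty q true Hq)) as [z1 [J1 F1]].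
  exists z0, z1. apply A2_derived; auto using Lletter_nonempty.
  apply (J_I I phi0 phi1 y0 y1 HI HA); auto. apply (J_I I phi0 phi1 y0 y1 HI HA); auto.
  assert (Hrel : forall z, P (Lp_letter q false) z = P (Lp_letter q true) (phi0 z)) by reflexivity.
  assert (Hle : forall z, J y0 y1 z -> P (Lp_letter q true) z <= P (Lp_letter q false) z).
  { intros z Hz. rewrite Hrel. pose proof (J_I I phi0 phi1 y0 y1 HI HA z Hz).
    apply (P_le I phi0 phi1 y0 y1 HI HA); auto.
    apply (f_in I phi0 phi1 y0 y1 HI HA false); auto.
    apply (phi0_ge I phi0 phi1 y0 y1 HI HA); auto. apply Hz. }
  assert (z1 <= z0).
  { apply (fix_order (Lp_letter q false) (Lp_letter q true) id); auto using Lletter_nonempty;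
    apply (J_I I phi0 phi1 y0 y1 HI HA); auto. }
  destruct H; auto. exfalso. subst z1.
  assert (Iz : I z0) by (apply (J_I I phi0 phi1 y0 y1 HI HA); auto).
  assert (phi0 z0 = z0).
  { rewrite Hrel in F0. rewrite <- F1 in F0 at 2.
    apply (P_inj (Lp_letter q true)); auto.
    apply (f_in I phi0 phi1 y0 y1 HI HA false); auto. }
  assert (z0 = y0).
  { apply (fix_unique I phi0 phi1 y0 y1 HI HA [false]); auto. discriminate.
    apply (I_y0 I phi0 phi1 y0 y1 HI HA). apply (fix0 I phi0 phi1 y0 y1 HI HA). }
  subst z0. unfold Lp_letter in F1. rewrite phiw_app, P_rep0_y0 in F1. simpl in F1.
  pose proof (phi1_lt I phi0 phi1 y0 y1 HI HA y0 Iz (y1y0 I phi0 phi1 y0 y1 HI HA)). lra.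
Qed.

Lemma A2_R q : exists z0 z1,
  A2 I (P (Rp_letter q false)) (P (Rp_letter q true)) z0 z1.
Proof.
  destruct (exists_fix I phi0 phi1 y0 y1 HI HA (Rp_letter q false) (Rletter_nonempty q false)) as [z0 [J0 F0]].
  destruct (exists_fix I phi0 phi1 y0 y1 HI HA (Rp_letter q true) (Rletter_nonempty q true)) as [z1 [J1 F1]].
  exists z0, z1. apply A2_derived; auto using Rletter_nonempty.
  apply (J_I I phi0 phi1 y0 y1 HI HA); auto. apply (J_I I phi0 phi1 y0 y1 HI HA); auto.
  assert (Hrel : forall z, P (Rp_letter q true) z = phi1 (P (Rp_letter q false) z)).
  { intros z. unfold Rp_letter. replace (false :: repeat true (S q)) with ((false :: repeat true q) ++ [true]).
    rewrite phiw_app. reflexivity. simpl. f_equal. clear. induction q; simpl; auto. now rewrite IHq. }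
  assert (Hle : forall z, J y0 y1 z -> P (Rp_letter q true) z <= P (Rp_letter q false) z).
  { intros z Hz. rewrite Hrel. pose proof (P_J I phi0 phi1 y0 y1 HI HA (Rp_letter q false) z Hz).
    apply (phi1_le I phi0 phi1 y0 y1 HI HA); auto.
    apply (J_I I phi0 phi1 y0 y1 HI HA); auto. apply H. }
  assert (z1 <= z0).
  { apply (fix_order (Rp_letter q false) (Rp_letter q true) id); auto using Rletter_nonempty;
    apply (J_I I phi0 phi1 y0 y1 HI HA); auto. }
  destruct H; auto. exfalso. subst z1.
  assert (Iz : I z0) by (apply (J_I I phi0 phi1 y0 y1 HI HA); auto).
  assert (phi1 z0 = z0). { rewrite Hrel, F0 in F1. auto. }
  assert (z0 = y1).
  { apply (fix_unique I phi0 phi1 y0 y1 HI HA [true]); auto. discriminate.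
    apply (I_y1 I phi0 phi1 y0 y1 HI HA). apply (fix1 I phi0 phi1 y0 y1 HI HA). }
  subst z0. unfold Rp_letter in F0. rewrite phiw_cons in F0. simpl phik in F0.
  rewrite <- (P_rep1_y1 q) in F0 at 2.
  apply P_inj in F0; auto.
  pose proof (phi0_gt I phi0 phi1 y0 y1 HI HA y1 Iz (y1y0 I phi0 phi1 y0 y1 HI HA)). lra.
  apply (f_in I phi0 phi1 y0 y1 HI HA false); auto.
Qed.
End Derived.

Definition Orb p0 p1 (u : word) (p z : R) (c : bool) : Prop :=
  exists s t, u = s ++ c :: t /\ z = phiw p0 p1 s p.

Lemma Orb_rot p0 p1 s1 s2 p z c : phiw p0 p1 (s1 ++ s2) p = p ->
  Orb p0 p1 (s1 ++ s2) p z c -> Orb p0 p1 (s2 ++ s1) (phiw p0 p1 s1 p) z c.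
Proof. intros Hf [s [t [Hu Hz]]]. subst z.
  destruct (app_eq_app _ _ _ _ Hu) as [l [[E1 E2]|[E1 E2]]].
  - destruct l as [|c' l'].
    + simpl in E2. rewrite app_nil_r in E1. subst. exists [], (t ++ s). split. reflexivity. reflexivity.
    + simpl in E2. injection E2 as <- ->. subst s1. exists (s2 ++ s), l'. split.
      rewrite <- app_assoc. reflexivity.
      rewrite phiw_app. rewrite <- (phiw_app _ _ (s ++ c :: l') s2), Hf. reflexivity.
  - subst. exists l, (t ++ s1). split. rewrite <- app_assoc. reflexivity.
    rewrite phiw_app. reflexivity. Qed.

Lemma Orb_succ p0 p1 u p z c : phiw p0 p1 u p = p -> Orb p0 p1 u p z c ->
  exists c2, Orb p0 p1 u p (phik p0 p1 c z) c2.
Proof. intros Hf [s [t [Hu Hz]]]. subst z. destruct t as [|c2 t2].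
  - subst u. rewrite <- phiw_one, <- phiw_app, Hf. destruct s as [|d s'].
    exists c. exists [], []. split; reflexivity.
    exists d. exists [], (s' ++ [c]). split; reflexivity.
  - exists c2. exists (s ++ [c]), t2. split. subst. rewrite <- app_assoc. reflexivity.
    rewrite phiw_app. reflexivity. Qed.

Lemma Orb_J I phi0 phi1 y0 y1 (HI : is_interval I) (HA : A2 I phi0 phi1 y0 y1) u p z c :
  J y0 y1 p -> Orb phi0 phi1 u p z c -> J y0 y1 z.
Proof. intros Hp [s [t [_ ->]]]. apply (P_J I phi0 phi1 y0 y1 HI HA); auto. Qed.

Lemma flat_split (g : bool -> word) x s c t : flat_map g x = s ++ c :: t ->
  exists s' c' t' r r', x = s' ++ c' :: t' /\ g c' = r ++ c :: r' /\ s = flat_map g s' ++ r.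
Proof. revert s; induction x as [|d x IH]; intros s H.
  - simpl in H. destruct s; discriminate.
  - simpl in H. destruct (app_eq_app _ _ _ _ H) as [l [[E1 E2]|[E1 E2]]].
    + destruct l as [|c' l'].
      * rewrite app_nil_r in E1. simpl in E2. subst s.
        destruct (IH [] (eq_sym E2)) as [s' [c'' [t' [r [r' [H1 [H2 H3]]]]]]].
        exists (d :: s'), c'', t', r, r'. split. subst. reflexivity. split; auto.
        simpl. rewrite <- app_assoc, <- H3, app_nil_r. reflexivity.
      * simpl in E2. injection E2 as -> ->. exists [], d, x, s, l'. repeat split; auto.
    + destruct (IH l E2) as [s' [c'' [t' [r [r' [H1 [H2 H3]]]]]]].
      exists (d :: s'), c'', t', r, r'. subst. repeat split; auto. simpl. rewrite app_assoc. reflexivity.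
Qed.

Lemma Orb_flat p0 p1 (g : bool -> word) x p z c :
  Orb p0 p1 (flat_map g x) p z c ->
  exists B c' r r', Orb (phiw p0 p1 (g false)) (phiw p0 p1 (g true)) x p B c' /\
    g c' = r ++ c :: r' /\ z = phiw p0 p1 r B.
Proof. intros [s [t [Hu Hz]]].
  destruct (flat_split g x s c t Hu) as [s' [c' [t' [r [r' [H1 [H2 H3]]]]]]].
  exists (phiw p0 p1 (flat_map g s') p), c', r, r'. split.
  exists s', t'. split; auto. symmetry. apply phiw_flat.
  split; auto. subst. apply phiw_app. Qed.

Lemma Orb_flat_back p0 p1 (g : bool -> word) x p B c' r c r' :
  Orb (phiw p0 p1 (g false)) (phiw p0 p1 (g true)) x p B c' -> g c' = r ++ c :: r' ->
  Orb p0 p1 (flat_map g x) p (phiw p0 p1 r B) c.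
Proof. intros [s [t [Hu Hz]]] Hg. subst. exists (flat_map g s ++ r), (r' ++ flat_map g t).
  split. rewrite flat_map_app. simpl. rewrite Hg. rewrite <- !app_assoc. reflexivity.
  rewrite phiw_app, phiw_flat. reflexivity. Qed.

Lemma repeat_split {A} (x : A) m r c r' : repeat x m = r ++ c :: r' ->
  c = x /\ r = repeat x (length r) /\ (length r < m)%nat.
Proof. revert r; induction m; intros r H. destruct r; discriminate.
  destruct r as [|d r]; simpl in H; injection H as H1 H2.
  subst. simpl. split; [auto|split; [reflexivity|lia]]. destruct (IHm r H2) as [? [? ?]]. subst d. simpl. split; auto. split. f_equal; auto. lia. Qed.

Lemma Lsplit0 n r c r' : repeat false n ++ [true] = r ++ c :: r' ->
  (c = true /\ r = repeat false n) \/ (c = false /\ exists i, (i < n)%nat /\ r = repeat false i).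
Proof. intros H. destruct (app_eq_app _ _ _ _ H) as [l [[E1 E2]|[E1 E2]]].
  - destruct l as [|d l].
    + rewrite app_nil_r in E1. simpl in E2. injection E2 as Hc Hr; subst c. left; auto.
    + simpl in E2. injection E2 as Hc Hr. subst c. right.
      destruct (repeat_split false n r d l E1) as [? [? ?]]. subst d. split; auto. exists (length r); auto.
  - destruct l as [|d l]. simpl in E2. rewrite app_nil_r in E1. subst. injection E2 as Hc Hr; subst c. left; auto.
    simpl in E2. injection E2 as E2 E3. destruct l; discriminate. Qed.

Lemma Lsplit q c' r c r' : Lp_letter q c' = r ++ c :: r' ->
  (c = true /\ r = repeat false (if c' then q else S q)) \/
  (c = false /\ exists i, (i < (if c' then q else S q))%nat /\ r = repeat false i).
Proof. intros H; destruct c'; [apply (Lsplit0 q _ _ r')|apply (Lsplit0 (S q) _ _ r')]; exact H. Qed.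

Lemma Rsplit0 m r c r' : false :: repeat true m = r ++ c :: r' ->
  (r = [] /\ c = false) \/ (c = true /\ exists i, (i < m)%nat /\ r = false :: repeat true i).
Proof. intros H. destruct r as [|d r]; simpl in H; injection H as H1 H2.
  subst c; left; auto. subst d.
  destruct (repeat_split true m r c r' H2) as [? [? ?]].
  right. split; auto. exists (length r). split; auto. f_equal; auto. Qed.

Lemma Rsplit q c' r c r' : Rp_letter q c' = r ++ c :: r' ->
  (r = [] /\ c = false) \/
  (c = true /\ exists i, (i < (if c' then S q else q))%nat /\ r = false :: repeat true i).
Proof. intros H; destruct c'; [apply (Rsplit0 (S q) _ _ r')|apply (Rsplit0 q _ _ r')]; exact H. Qed.

Definition Inv I phi0 phi1 (w : word) : Prop :=
  forall a b, I a -> I b ->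
    phiw phi0 phi1 (false :: true :: w) a = a ->
    phiw phi0 phi1 (true :: false :: w) b = b ->
    a < b /\ Orb phi0 phi1 (true :: false :: w) b a false /\
    forall z c, Orb phi0 phi1 (true :: false :: w) b z c ->
      (c = false -> z <= a) /\ (c = true -> b <= z) /\ phi1 b <= z /\ z <= phi0 a.

Lemma rep_S_end {A} (x : A) n : repeat x (S n) = repeat x n ++ [x].
Proof. induction n; simpl; auto. simpl in IHn. now rewrite IHn. Qed.

Section Bases.
#[local] Set Default Proof Using "All".
Variables (I : R -> Prop) (phi0 phi1 : R -> R) (y0 y1 : R).
Hypothesis HI : is_interval I.
Hypothesis HA : A2 I phi0 phi1 y0 y1.
Notation P := (phiw phi0 phi1).
Let JI := J_I I phi0 phi1 y0 y1 HI HA.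
Let PJ := P_J I phi0 phi1 y0 y1 HI HA.
Let PI := P_in I phi0 phi1 y0 y1 HI HA.
Let Ple := P_le I phi0 phi1 y0 y1 HI HA.
Let Plt := P_lt I phi0 phi1 y0 y1 HI HA.
Let Prev := P_rev_le I phi0 phi1 y0 y1 HI HA.
Let fixJ := fix_J I phi0 phi1 y0 y1 HI HA.
Let r0m := rep0_mono I phi0 phi1 y0 y1 HI HA.
Let r1m := rep1_mono I phi0 phi1 y0 y1 HI HA.
Let Hy := y1y0 I phi0 phi1 y0 y1 HI HA.

Lemma J_phi0 z : J y0 y1 z -> J y0 y1 (phi0 z).
Proof. apply (phi0_J I phi0 phi1 y0 y1 HI HA). Qed.
Lemma J_phi1 z : J y0 y1 z -> J y0 y1 (phi1 z).
Proof. apply (phi1_J I phi0 phi1 y0 y1 HI HA). Qed.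
Lemma ge0 z : J y0 y1 z -> z <= phi0 z.
Proof. intros H. apply (phi0_ge I phi0 phi1 y0 y1 HI HA); auto. apply H. Qed.
Lemma le1 z : J y0 y1 z -> phi1 z <= z.
Proof. intros H. apply (phi1_le I phi0 phi1 y0 y1 HI HA); auto. apply H. Qed.

Lemma baseA k : Inv I phi0 phi1 (repeat false k).
Proof. intros a b Ia Ib Fa Fb.
  assert (Jb : J y0 y1 b) by (eapply fixJ; [|exact Ib|exact Fb]; discriminate).
  assert (Ja : J y0 y1 a) by (eapply fixJ; [|exact Ia|exact Fa]; discriminate).
  set (a' := P (repeat false k) (phi1 b)).
  assert (Hb : phi0 a' = b).
  { unfold a'. rewrite <- Fb at 2. rewrite phiw_cons. simpl phik.
    change (false :: repeat false k) with (repeat false (S k)). rewrite rep_S_end, phiw_app. reflexivity. }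
  assert (Ha : a = a').
  { apply (fix_unique I phi0 phi1 y0 y1 HI HA (false :: true :: repeat false k)); auto. discriminate.
    unfold a'; apply PI; apply (f_in I phi0 phi1 y0 y1 HI HA true); auto.
    rewrite phiw_cons. simpl phik. rewrite Hb. reflexivity. }
  subst a.
  assert (Ja' : J y0 y1 a') by (unfold a'; apply PJ, J_phi1; auto).
  assert (Hlt : a' < b).
  { rewrite <- Hb. apply (phi0_gt I phi0 phi1 y0 y1 HI HA); auto.
    assert (phi1 b < y0).
    { pose proof (Ple [true] b y0 (JI _ Jb) (I_y0 I phi0 phi1 y0 y1 HI HA) (proj2 Jb)). simpl in H.
      pose proof (phi1_lt I phi0 phi1 y0 y1 HI HA y0 (I_y0 I phi0 phi1 y0 y1 HI HA) Hy). lra. }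
    unfold a'. rewrite <- (P_rep0_y0 I phi0 phi1 y0 y1 HI HA k).
    apply Plt; auto. apply JI, J_phi1; auto. apply (I_y0 I phi0 phi1 y0 y1 HI HA). }
  split; [auto|split].
  - exists (true :: repeat false k), []. split. change (true :: false :: repeat false k = (true :: repeat false k) ++ [false]). simpl. f_equal. rewrite <- rep_S_end. reflexivity. reflexivity.
  - intros z c [s [t [Hu Hz]]]. subst z.
    destruct s as [|d s].
    + simpl in Hu. injection Hu as Hc _. subst c. simpl.
      split; [discriminate|]. split; [lra|]. split; [apply le1; auto|]. rewrite Hb. lra.
    + simpl in Hu. injection Hu as Hd Hu. subst d.
      change (false :: repeat false k) with (repeat false (S k)) in Hu.
      destruct (repeat_split false (S k) s c t ltac:(first [exact Hu | exact (eq_sym Hu)])) as [Hc [Hs Hl]]. subst c.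
      rewrite Hs. rewrite phiw_cons. simpl phik.
      assert (P (repeat false (length s)) (phi1 b) <= a').
      { unfold a'. apply r0m. apply J_phi1; auto. lia. }
      split; [intros; auto|]. split; [discriminate|]. split.
      * change (phi1 b) with (P (repeat false 0) (phi1 b)) at 1. apply r0m. apply J_phi1; auto. lia.
      * pose proof (ge0 a' Ja'). lra.
Qed.

Lemma baseB k : Inv I phi0 phi1 (repeat true k).
Proof. intros a b Ia Ib Fa Fb.
  assert (Jb : J y0 y1 b) by (eapply fixJ; [|exact Ib|exact Fb]; discriminate).
  assert (Ja : J y0 y1 a) by (eapply fixJ; [|exact Ia|exact Fa]; discriminate).
  assert (Ha : a = phi1 b).
  { apply (fix_unique I phi0 phi1 y0 y1 HI HA (false :: true :: repeat true k)); auto. discriminate.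
    apply (f_in I phi0 phi1 y0 y1 HI HA true); auto.
    change (false :: true :: repeat true k) with (false :: repeat true (S k)).
    rewrite rep_S_end. rewrite app_comm_cons, phiw_app.
    change (P (false :: repeat true k) (phi1 b)) with (P (true :: false :: repeat true k) b).
    rewrite Fb. reflexivity. }
  subst a.
  assert (Hb : P (repeat true k) (phi0 (phi1 b)) = b) by exact Fb.
  assert (Hlt : phi1 b < b).
  { apply (phi1_lt I phi0 phi1 y0 y1 HI HA); auto.
    rewrite <- Hb. rewrite <- (P_rep1_y1 I phi0 phi1 y0 y1 HI HA k).
    apply Plt. apply (I_y1 I phi0 phi1 y0 y1 HI HA). apply JI, J_phi0; auto.
    pose proof (phi0_gt I phi0 phi1 y0 y1 HI HA y1 (I_y1 I phi0 phi1 y0 y1 HI HA) Hy).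
    pose proof (Ple [false] y1 (phi1 b) (I_y1 I phi0 phi1 y0 y1 HI HA) Ia (proj1 Ja)). simpl in H0. lra. }
  split; [auto|split].
  - exists [true], (repeat true k). split; reflexivity.
  - assert (Hb2 : b <= phi0 (phi1 b)).
    { rewrite <- Hb at 1. change (phi0 (phi1 b)) with (P (repeat true 0) (phi0 (phi1 b))) at 2.
      apply r1m. apply J_phi0; auto. lia. }
    pose proof (ge0 _ Ja).
    intros z c [s [t [Hu Hz]]]. subst z.
    destruct s as [|d s].
    + simpl in Hu. injection Hu as Hc _. subst c. simpl.
      split; [discriminate|]. split; lra.
    + simpl in Hu. injection Hu as Hd Hu. subst d. destruct s as [|d s].
      * simpl in Hu. injection Hu as Hc _. subst c. simpl. split; [lra|]. split; [discriminate|]. lra.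
      * simpl in Hu. injection Hu as Hd Hu. subst d.
        destruct (repeat_split true k s c t ltac:(first [exact Hu | exact (eq_sym Hu)])) as [Hc [Hs Hl]]. subst c.
        rewrite Hs. rewrite !phiw_cons. simpl phik.
        assert (b <= P (repeat true (length s)) (phi0 (phi1 b))).
        { rewrite <- Hb at 1. apply r1m. apply J_phi0; auto. lia. }
        assert (P (repeat true (length s)) (phi0 (phi1 b)) <= phi0 (phi1 b)).
        { change (phi0 (phi1 b)) with (P (repeat true 0) (phi0 (phi1 b))) at 2.
          apply r1m. apply J_phi0; auto. lia. }
        split; [discriminate|]. split; [intros; lra|]. lra.
Qed.
End Bases.

Section Steps.
#[local] Set Default Proof Using "All".
Variables (I : R -> Prop) (phi0 phi1 : R -> R) (y0 y1 : R).
Hypothesis HI : is_interval I.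
Hypothesis HA : A2 I phi0 phi1 y0 y1.
Notation P := (phiw phi0 phi1).
Let JI := J_I I phi0 phi1 y0 y1 HI HA.
Let PJ := P_J I phi0 phi1 y0 y1 HI HA.
Let PI := P_in I phi0 phi1 y0 y1 HI HA.
Let Ple := P_le I phi0 phi1 y0 y1 HI HA.
Let Plt := P_lt I phi0 phi1 y0 y1 HI HA.
Let Prev := P_rev_le I phi0 phi1 y0 y1 HI HA.
Let fixJ := fix_J I phi0 phi1 y0 y1 HI HA.
Let r0m := rep0_mono I phi0 phi1 y0 y1 HI HA.
Let r1m := rep1_mono I phi0 phi1 y0 y1 HI HA.

Lemma Orb_flat_J (g : bool -> word) x p B c : J y0 y1 p ->
  Orb (P (g false)) (P (g true)) x p B c -> J y0 y1 B.
Proof. intros Hp [s [t [_ ->]]]. rewrite phiw_flat. apply PJ; auto. Qed.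

Lemma stepL q w' : (1 <= q)%nat ->
  (forall p0 p1 z0 z1, A2 I p0 p1 z0 z1 -> Inv I p0 p1 w') ->
  Inv I phi0 phi1 (repeat false q ++ true :: Lp q w' ++ repeat false q).
Proof. intros Hq IH a b Ia Ib Fa Fb.
  set (psi0 := P (Lp_letter q false)). set (psi1 := P (Lp_letter q true)).
  destruct (A2_L I phi0 phi1 y0 y1 HI HA q Hq) as [z0 [z1 HA']].
  specialize (IH psi0 psi1 z0 z1 HA').
  set (u := true :: false :: repeat false q ++ true :: Lp q w').
  set (ua := false :: true :: repeat false q ++ true :: Lp q w').
  assert (Ev : true :: false :: repeat false q ++ true :: Lp q w' ++ repeat false q = u ++ repeat false q)
    by (unfold u; simpl; rewrite <- !app_assoc; reflexivity).
  assert (Ea : false :: true :: repeat false q ++ true :: Lp q w' ++ repeat false q = ua ++ repeat false q)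
    by (unfold ua; simpl; rewrite <- !app_assoc; reflexivity).
  assert (Ev' : Lp q (true :: false :: w') = repeat false q ++ u).
  { unfold u, Lp. simpl. rewrite <- !app_assoc. simpl. reflexivity. }
  assert (Ea' : Lp q (false :: true :: w') = repeat false q ++ ua).
  { unfold ua, Lp. cbn [flat_map]. unfold Lp_letter. rewrite rep_S_end. rewrite <- !app_assoc. reflexivity. }
  rewrite Ev in Fb |- *. rewrite Ea in Fa.
  set (b' := P u b). set (a' := P ua a).
  assert (Hbb : P (repeat false q) b' = b) by (unfold b'; rewrite <- phiw_app; auto).
  assert (Haa : P (repeat false q) a' = a) by (unfold a'; rewrite <- phiw_app; auto).
  assert (Fb' : P (Lp q (true :: false :: w')) b' = b').
  { rewrite Ev', phiw_app, Hbb. reflexivity. }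
  assert (Fa' : P (Lp q (false :: true :: w')) a' = a').
  { rewrite Ea', phiw_app, Haa. reflexivity. }
  assert (Ib' : I b') by (apply PI; auto). assert (Ia' : I a') by (apply PI; auto).
  assert (Jb' : J y0 y1 b') by (eapply fixJ; [|exact Ib'|exact Fb'];
    rewrite Ev'; intros H; apply app_eq_nil in H; destruct H; discriminate).
  assert (Ja' : J y0 y1 a') by (eapply fixJ; [|exact Ia'|exact Fa'];
    rewrite Ea'; intros H; apply app_eq_nil in H; destruct H; discriminate).
  assert (Jb : J y0 y1 b) by (rewrite <- Hbb; apply PJ; auto).
  assert (Ja : J y0 y1 a) by (rewrite <- Haa; apply PJ; auto).
  assert (HFa : phiw psi0 psi1 (false :: true :: w') a' = a').
  { unfold psi0, psi1. rewrite phiw_flat. exact Fa'. }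
  assert (HFb : phiw psi0 psi1 (true :: false :: w') b' = b').
  { unfold psi0, psi1. rewrite phiw_flat. exact Fb'. }
  destruct (IH a' b' Ia' Ib' HFa HFb) as [Hlt [HOa Hbd]].
  assert (Hpsi1 : forall z, psi1 z = phi1 (P (repeat false q) z)).
  { intros z. unfold psi1, Lp_letter. rewrite phiw_app. reflexivity. }
  assert (Hpsi0 : forall z, psi0 z = phi1 (P (repeat false (S q)) z)).
  { intros z. unfold psi0, Lp_letter. rewrite phiw_app. reflexivity. }
  assert (HS : forall z, P (repeat false (S q)) z = phi0 (P (repeat false q) z)).
  { intros z. rewrite rep_S_end, phiw_app. reflexivity. }
  assert (HSg : forall n z, P (repeat false (S n)) z = phi0 (P (repeat false n) z)).
  { intros n z. rewrite rep_S_end, phiw_app. reflexivity. }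
  assert (Ipsi : forall (c : bool) z, I z -> I (phik psi0 psi1 c z)).
  { intros c z Hz. destruct c; simpl; unfold psi0, psi1; apply PI; auto. }
  assert (Fbpsi : phiw psi0 psi1 (true :: false :: w') b' = b').
  { unfold psi0, psi1. rewrite phiw_flat. exact Fb'. }
  split; [|split].
  - rewrite <- Haa, <- Hbb. apply Plt; auto.
  - assert (Hr : Lp_letter q false = repeat false q ++ false :: [true]).
    { unfold Lp_letter. rewrite rep_S_end, <- app_assoc. reflexivity. }
    pose proof (Orb_flat_back phi0 phi1 (Lp_letter q) _ _ _ _ _ _ _ HOa Hr) as H.
    fold (Lp q (true :: false :: w')) in H. rewrite Ev' in H. rewrite Haa in H.
    apply Orb_rot in H. rewrite Hbb in H. exact H.
    rewrite <- Ev'. exact Fb'.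
  - intros z c Hz.
    apply Orb_rot in Hz; [|exact Fb].
    fold b' in Hz. rewrite <- Ev' in Hz.
    destruct (Orb_flat phi0 phi1 (Lp_letter q) _ _ _ _ Hz) as [B [c' [r [r' [HOB [Hg Hzr]]]]]].
    fold psi0 psi1 in HOB.
    assert (JB : J y0 y1 B) by (exact (Orb_flat_J (Lp_letter q) _ _ _ _ Jb' HOB)).
    assert (IB : I B) by (apply JI; auto).
    destruct (Hbd B c' HOB) as [Hc0 [Hc1 [Hlo Hhi]]].
    destruct (Orb_succ _ _ _ _ _ _ Fbpsi HOB) as [c2 Hsucc].
    destruct (Hbd _ _ Hsucc) as [_ [_ [Hslo Hshi]]].
    rewrite Hpsi1 in Hlo. rewrite Hbb in Hlo.
    assert (Hphi0a : phi0 a = P (repeat false (S q)) a') by (rewrite HS, Haa; reflexivity).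
    assert (Hfa : a <= phi0 a) by (apply (phi0_ge I phi0 phi1 y0 y1 HI HA); auto; apply Ja).
    assert (HBr : forall i, B <= P (repeat false i) B).
    { intros i. change B with (P (repeat false 0) B) at 1. apply r0m; auto. lia. }
    subst z.
    destruct (Lsplit q c' r c r' Hg) as [[Hc Hr]|[Hc [i [Hi Hr]]]]; subst c r.
    + destruct c'.
      *
        simpl in Hshi. rewrite Hpsi1, Hpsi0 in Hshi.
        apply (Prev [true]) in Hshi; [|apply PI; auto|apply PI; auto].
        pose proof (Ple (repeat false q) _ _ Ib' IB (Hc1 eq_refl)). rewrite Hbb in H.
        pose proof (HBr q).
        split; [discriminate|]. split; [intros; auto|]. split; [lra|]. rewrite Hphi0a. exact Hshi.
      * simpl in Hslo. rewrite Hpsi0, Hpsi1 in Hslo.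
        apply (Prev [true]) in Hslo; [|apply PI; auto|apply PI; auto]. rewrite Hbb in Hslo.
        pose proof (Ple (repeat false (S q)) _ _ IB Ia' (Hc0 eq_refl)). rewrite <- Hphi0a in H.
        pose proof (HBr (S q)).
        split; [discriminate|]. split; [intros; auto|]. split; lra.
    + destruct c'.
      * simpl in Hshi. rewrite Hpsi1, Hpsi0 in Hshi.
        apply (Prev [true]) in Hshi; [|apply PI; auto|apply PI; auto].
        destruct q as [|q0]. lia.
        rewrite (HSg q0 B), (HSg (S q0) a') in Hshi.
        apply (Prev [false]) in Hshi; [|apply PI; auto|apply PI; auto].
        rewrite Haa in Hshi.
        assert (P (repeat false i) B <= P (repeat false q0) B) by (apply r0m; auto; lia).
        pose proof (HBr i).
        split; [intros; lra|]. split; [discriminate|]. split; lra.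
      * assert (P (repeat false i) B <= P (repeat false q) B) by (apply r0m; auto; lia).
        pose proof (Ple (repeat false q) _ _ IB Ia' (Hc0 eq_refl)). rewrite Haa in H0.
        pose proof (HBr i).
        split; [intros; lra|]. split; [discriminate|]. split; lra.
Qed.

Lemma stepR q w' :
  (forall p0 p1 z0 z1, A2 I p0 p1 z0 z1 -> Inv I p0 p1 w') ->
  Inv I phi0 phi1 (repeat true q ++ Rp q w' ++ false :: repeat true q).
Proof. intros IH a b Ia Ib Fa Fb.
  set (psi0 := P (Rp_letter q false)). set (psi1 := P (Rp_letter q true)).
  destruct (A2_R I phi0 phi1 y0 y1 HI HA q) as [z0 [z1 HA']].
  specialize (IH psi0 psi1 z0 z1 HA').
  set (u := true :: false :: repeat true q ++ Rp q w').
  set (ua := false :: true :: repeat true q ++ Rp q w').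
  assert (Ev : true :: false :: repeat true q ++ Rp q w' ++ false :: repeat true q = u ++ false :: repeat true q)
    by (unfold u; simpl; rewrite <- !app_assoc; reflexivity).
  assert (Ea : false :: true :: repeat true q ++ Rp q w' ++ false :: repeat true q = ua ++ false :: repeat true q)
    by (unfold ua; simpl; rewrite <- !app_assoc; reflexivity).
  assert (Ev' : Rp q (true :: false :: w') = (false :: repeat true q) ++ u).
  { unfold u, Rp. cbn [flat_map]. unfold Rp_letter. rewrite rep_S_end.
    simpl. rewrite <- !app_assoc. reflexivity. }
  assert (Ea' : Rp q (false :: true :: w') = (false :: repeat true q) ++ ua).
  { unfold ua, Rp. cbn [flat_map]. unfold Rp_letter. simpl. rewrite <- ?app_assoc. reflexivity. }
  rewrite Ev in Fb |- *. rewrite Ea in Fa.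
  set (b' := P u b). set (a' := P ua a).
  assert (Hbb : psi0 b' = b) by (unfold psi0, b'; rewrite <- phiw_app; auto).
  assert (Haa : psi0 a' = a) by (unfold psi0, a'; rewrite <- phiw_app; auto).
  assert (Fb' : P (Rp q (true :: false :: w')) b' = b').
  { rewrite Ev', phiw_app. change (P (false :: repeat true q) b') with (psi0 b'). rewrite Hbb. reflexivity. }
  assert (Fa' : P (Rp q (false :: true :: w')) a' = a').
  { rewrite Ea', phiw_app. change (P (false :: repeat true q) a') with (psi0 a'). rewrite Haa. reflexivity. }
  assert (Ib' : I b') by (apply PI; auto). assert (Ia' : I a') by (apply PI; auto).
  assert (Jb' : J y0 y1 b') by (eapply fixJ; [|exact Ib'|exact Fb'];
    rewrite Ev'; intros H; apply app_eq_nil in H; destruct H; discriminate).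
  assert (Ja' : J y0 y1 a') by (eapply fixJ; [|exact Ia'|exact Fa'];
    rewrite Ea'; intros H; apply app_eq_nil in H; destruct H; discriminate).
  assert (Jb : J y0 y1 b) by (rewrite <- Hbb; apply PJ; auto).
  assert (Ja : J y0 y1 a) by (rewrite <- Haa; apply PJ; auto).
  assert (HFa : phiw psi0 psi1 (false :: true :: w') a' = a').
  { unfold psi0, psi1. rewrite phiw_flat. exact Fa'. }
  assert (HFb : phiw psi0 psi1 (true :: false :: w') b' = b').
  { unfold psi0, psi1. rewrite phiw_flat. exact Fb'. }
  destruct (IH a' b' Ia' Ib' HFa HFb) as [Hlt [HOa Hbd]].
  assert (Hpsi1 : forall z, psi1 z = phi1 (psi0 z)).
  { intros z. unfold psi1, psi0, Rp_letter. rewrite rep_S_end, app_comm_cons, phiw_app. reflexivity. }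
  assert (Hpsi0 : forall z, psi0 z = P (repeat true q) (phi0 z)) by reflexivity.
  assert (HSg : forall n z, P (repeat true (S n)) z = phi1 (P (repeat true n) z)).
  { intros n z. rewrite rep_S_end, phiw_app. reflexivity. }
  split; [|split].
  - rewrite <- Haa, <- Hbb. apply Plt; auto.
  - destruct (Orb_succ _ _ _ _ _ _ HFb HOa) as [c2 Hs]. simpl phik in Hs.
    assert (Hr : Rp_letter q c2 = [] ++ false :: (if c2 then repeat true (S q) else repeat true q))
      by (destruct c2; reflexivity).
    pose proof (Orb_flat_back phi0 phi1 (Rp_letter q) _ _ _ _ _ _ _ Hs Hr) as H.
    fold (Rp q (true :: false :: w')) in H. rewrite Ev' in H. rewrite phiw_nil, Haa in H.
    apply Orb_rot in H. change (P (false :: repeat true q) b') with (psi0 b') in H. rewrite Hbb in H. exact H.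
    rewrite <- Ev'. exact Fb'.
  - intros z c Hz.
    apply Orb_rot in Hz; [|exact Fb].
    fold b' in Hz. rewrite <- Ev' in Hz.
    destruct (Orb_flat phi0 phi1 (Rp_letter q) _ _ _ _ Hz) as [B [c' [r [r' [HOB [Hg Hzr]]]]]].
    fold psi0 psi1 in HOB.
    assert (JB : J y0 y1 B) by (exact (Orb_flat_J (Rp_letter q) _ _ _ _ Jb' HOB)).
    assert (IB : I B) by (apply JI; auto).
    destruct (Hbd B c' HOB) as [Hc0 [Hc1 [Hlo Hhi]]].
    destruct (Orb_succ _ _ _ _ _ _ HFb HOB) as [c2 Hsucc].
    destruct (Hbd _ _ Hsucc) as [_ [_ [Hslo Hshi]]].
    rewrite Haa in Hhi. rewrite Hpsi1, Hbb in Hlo.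
    assert (Hfa : a <= phi0 a) by (apply (phi0_ge I phi0 phi1 y0 y1 HI HA); auto; apply Ja).
    assert (Hfb : phi1 b <= b) by (apply (phi1_le I phi0 phi1 y0 y1 HI HA); auto; apply Jb).
    assert (JB0 : J y0 y1 (phi0 B)) by (apply (phi0_J I phi0 phi1 y0 y1 HI HA); auto).
    assert (HB0 : phi0 B <= phi0 a) by (apply (Ple [false]); auto).
    subst z.
    destruct (Rsplit q c' r c r' Hg) as [[Hr Hc]|[Hc [i [Hi Hr]]]]; subst c r.
    + simpl. split; [intros; auto|]. split; [discriminate|]. split; lra.
    + rewrite phiw_cons. simpl phik.
      assert (Hup : P (repeat true i) (phi0 B) <= phi0 B).
      { change (phi0 B) with (P (repeat true 0) (phi0 B)) at 2. apply r1m; auto. lia. }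
      assert (Hlow : b <= P (repeat true i) (phi0 B)).
      { destruct c'.
        - rewrite <- Hbb, Hpsi0.
          eapply Rle_trans; [|apply r1m; [exact JB0|]]. 2: instantiate (1 := q); lia.
          apply Ple; try apply (f_in I phi0 phi1 y0 y1 HI HA false); auto.
          apply (Ple [false]); auto.
        - destruct q as [|q0]. lia.
          simpl phik in Hslo. rewrite Hpsi1, !Hpsi0 in Hslo.
          rewrite (HSg q0 (phi0 B)) in Hslo.
          apply (Prev [true]) in Hslo; try (apply PI; apply (f_in I phi0 phi1 y0 y1 HI HA false); auto).
          rewrite HSg in Hslo. rewrite <- Hbb, Hpsi0.
          rewrite HSg. eapply Rle_trans. exact Hslo. apply r1m; auto. lia. }
      split; [discriminate|]. split; [intros; auto|]. split; lra.
Qed.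
End Steps.

Ltac lnorm := repeat progress (simpl; rewrite <- ?app_assoc).

Lemma last_true_form (l Y X : word) : l = false :: X -> l = Y ++ [true] ->
  exists w, l = false :: w ++ [true].
Proof. intros H1 H2. destruct (list_eq_dec Bool.bool_dec X []) as [->|HX].
  - subst l. destruct Y as [|d Y]. discriminate. destruct Y; discriminate.
  - destruct (exists_last HX) as [X' [e ->]]. subst l.
    rewrite app_comm_cons in H2. apply app_inj_tail in H2. destruct H2 as [_ ->].
    exists X'. reflexivity. Qed.

Lemma valid_shape x : valid x -> x = [false] \/ x = [true] \/ exists w, x = false :: w ++ [true].
Proof. intros H. induction H.
  - left; auto.
  - right; left; auto.
  - right; right. destruct IHvalid as [->|[->|[w' ->]]].
    + exists (repeat false p). simpl. rewrite app_nil_r. reflexivity.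
    + destruct p. lia. exists (repeat false p). simpl. rewrite app_nil_r. reflexivity.
    + unfold Lp. rewrite app_comm_cons, flat_map_app. simpl. rewrite app_nil_r.
      destruct p as [|p]. lia. simpl.
      exists (repeat false (S p) ++ true :: flat_map (Lp_letter (S p)) w' ++ repeat false (S p)).
      lnorm. reflexivity.
  - right; right. destruct IHvalid as [->|[->|[w' ->]]].
    + destruct p. lia. exists (repeat true p). simpl. rewrite app_nil_r. f_equal. rewrite <- rep_S_end. reflexivity.
    + exists (repeat true p). simpl. rewrite app_nil_r. f_equal. rewrite <- rep_S_end. reflexivity.
    + unfold Rp. rewrite app_comm_cons, flat_map_app. simpl. rewrite app_nil_r.
      exists (repeat true p ++ flat_map (Rp_letter p) w' ++ false :: repeat true p).
      lnorm. rewrite <- ?rep_S_end. reflexivity.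
Qed.

Section ValidInv.
Variable I : R -> Prop.
Hypothesis HI : is_interval I.

Lemma Inv_valid x : valid x -> forall w, x = false :: w ++ [true] ->
  forall phi0 phi1 y0 y1, A2 I phi0 phi1 y0 y1 -> Inv I phi0 phi1 w.
Proof. intros H. induction H as [| |p w0 Hp Hv IH|p w0 Hp Hv IH]; intros w Heq phi0 phi1 y0 y1 HA.
  - injection Heq as Heq. destruct w; discriminate.
  - discriminate.
  - destruct (valid_shape w0 Hv) as [->|[->|[w' ->]]].
    + assert (E : false :: w ++ [true] = false :: repeat false p ++ [true])
        by (rewrite <- Heq; simpl; rewrite app_nil_r; reflexivity).
      injection E as E. apply app_inj_tail in E. destruct E as [-> _].
      apply (baseA I phi0 phi1 y0 y1 HI HA).
    + destruct p as [|k]. lia.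
      assert (E : false :: w ++ [true] = false :: repeat false k ++ [true])
        by (rewrite <- Heq; simpl; rewrite app_nil_r; reflexivity).
      injection E as E. apply app_inj_tail in E. destruct E as [-> _].
      apply (baseA I phi0 phi1 y0 y1 HI HA).
    + assert (E : false :: w ++ [true] = false :: (repeat false p ++ true :: Lp p w' ++ repeat false p) ++ [true]).
      { rewrite <- Heq. unfold Lp. rewrite app_comm_cons, flat_map_app. simpl. rewrite app_nil_r.
        destruct p. lia. lnorm. reflexivity. }
      injection E as E. apply app_inj_tail in E. destruct E as [-> _].
      apply (stepL I phi0 phi1 y0 y1 HI HA p w' Hp). intros. eapply IH; eauto.
  - destruct (valid_shape w0 Hv) as [->|[->|[w' ->]]].
    + destruct p as [|k]. lia.
      assert (E : false :: w ++ [true] = false :: repeat true k ++ [true])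
        by (rewrite <- Heq; simpl; rewrite app_nil_r; f_equal; rewrite <- rep_S_end; reflexivity).
      injection E as E. apply app_inj_tail in E. destruct E as [-> _].
      apply (baseB I phi0 phi1 y0 y1 HI HA).
    + assert (E : false :: w ++ [true] = false :: repeat true p ++ [true])
        by (rewrite <- Heq; simpl; rewrite app_nil_r; f_equal; rewrite <- rep_S_end; reflexivity).
      injection E as E. apply app_inj_tail in E. destruct E as [-> _].
      apply (baseB I phi0 phi1 y0 y1 HI HA).
    + assert (E : false :: w ++ [true] = false :: (repeat true p ++ Rp p w' ++ false :: repeat true p) ++ [true]).
      { rewrite <- Heq. unfold Rp. rewrite app_comm_cons, flat_map_app. simpl. rewrite app_nil_r.
        lnorm. rewrite <- ?rep_S_end. reflexivity. }
      injection E as E. apply app_inj_tail in E. destruct E as [-> _].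
      apply (stepR I phi0 phi1 y0 y1 HI HA p w'). intros. eapply IH; eauto.
Qed.
End ValidInv.

Definition pw (pi : word) (k : nat) : bool := nth (Nat.modulo k (length pi)) pi false.

Fixpoint traj p0 p1 (f : nat -> bool) (z : R) (k : nat) : R :=
  match k with O => z | S k => phik p0 p1 (f k) (traj p0 p1 f z k) end.

Lemma firstn_S_nth {A} (l : list A) r d : (r < length l)%nat ->
  firstn (S r) l = firstn r l ++ [nth r l d].
Proof. revert r; induction l as [|x l IH]; intros r H; simpl in *. lia.
  destruct r. reflexivity. rewrite firstn_cons. simpl. f_equal. apply IH. lia. Qed.

Lemma split_nth {A} (l : list A) r d : (r < length l)%nat ->
  l = firstn r l ++ nth r l d :: skipn (S r) l.
Proof. revert r; induction l as [|x l IH]; intros r H; simpl in *. lia.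
  destruct r. reflexivity. simpl. f_equal. apply IH. lia. Qed.

Lemma mod_S k n : n <> 0%nat ->
  ((S (k mod n) < n)%nat /\ S k mod n = S (k mod n)) \/ (S (k mod n) = n /\ S k mod n = 0%nat).
Proof. intros Hn. pose proof (Nat.mod_upper_bound k n Hn). pose proof (Nat.div_mod_eq k n).
  destruct (Nat.lt_ge_cases (S (k mod n)) n).
  - left. split; auto. symmetry. apply Nat.mod_unique with (q := (k / n)%nat); lia.
  - right. split. lia. symmetry. apply Nat.mod_unique with (q := S (k / n)%nat); lia. Qed.

Section Traj.
Variables p0 p1 : R -> R.
Notation T := (traj p0 p1).
Notation P := (phiw p0 p1).

Lemma traj_shift f z k m : T f z (k + m) = T (fun i => f (k + i)%nat) (T f z k) m.
Proof. induction m; simpl. now rewrite Nat.add_0_r. rewrite Nat.add_succ_r. simpl. now rewrite IHm. Qed.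

Lemma traj_phiw f z m : T f z m = P (map f (seq 0 m)) z.
Proof. induction m; [reflexivity|]. cbn [traj]. rewrite seq_S, map_app, phiw_app. rewrite <- IHm. reflexivity. Qed.

Lemma traj_ext f g z m : (forall i, (i < m)%nat -> f i = g i) -> T f z m = T g z m.
Proof. induction m; intros H; simpl; auto. rewrite H by lia. rewrite IHm; auto. Qed.

Variable pi : word.
Hypothesis Hpi : pi <> [].
Let n := length pi.
Lemma n_pos : n <> 0%nat. Proof. unfold n. destruct pi; simpl; [congruence|lia]. Qed.

Lemma pw_small i : (i < n)%nat -> pw pi i = nth i pi false.
Proof. intros. unfold pw. fold n. rewrite Nat.mod_small; auto. Qed.

Lemma pw_per k : pw pi (k + n) = pw pi k.
Proof. unfold pw. fold n. replace (k + n)%nat with (k + 1 * n)%nat by lia. now rewrite Nat.Div0.mod_add. Qed.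

Lemma pw_perq k q : pw pi (k + q * n) = pw pi k.
Proof. induction q; simpl. now rewrite Nat.add_0_r.
  replace (k + (n + q * n))%nat with ((k + q * n) + n)%nat by lia. now rewrite pw_per. Qed.

Lemma pw_mod k : pw pi k = pw pi (k mod n).
Proof. unfold pw. fold n. now rewrite Nat.Div0.mod_mod. Qed.

Lemma traj_firstn z k : (k <= n)%nat -> T (pw pi) z k = P (firstn k pi) z.
Proof. induction k; intros H; [reflexivity|]. cbn [traj]. rewrite IHk by lia.
  rewrite (firstn_S_nth pi k false) by lia. rewrite phiw_app. simpl.
  rewrite pw_small by lia. reflexivity. Qed.

Hypothesis z0 : R.
Hypothesis Hz0 : P pi z0 = z0.

Lemma traj_per k : T (pw pi) z0 (k + n) = T (pw pi) z0 k.
Proof. rewrite Nat.add_comm, traj_shift. rewrite traj_firstn by lia.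
  unfold n. rewrite firstn_all, Hz0. apply traj_ext. intros. rewrite Nat.add_comm. apply pw_per. Qed.

Lemma traj_perq r q : T (pw pi) z0 (r + q * n) = T (pw pi) z0 r.
Proof. induction q; simpl. now rewrite Nat.add_0_r.
  replace (r + (n + q * n))%nat with ((r + q * n) + n)%nat by lia. now rewrite traj_per. Qed.

Lemma traj_mod k : T (pw pi) z0 k = T (pw pi) z0 (k mod n).
Proof. pose proof (Nat.div_mod_eq k n). rewrite H at 1.
  replace (n * (k / n) + k mod n)%nat with (k mod n + (k / n) * n)%nat by lia. apply traj_perq. Qed.

Lemma Orb_traj k : Orb p0 p1 pi z0 (T (pw pi) z0 k) (pw pi k).
Proof. set (r := (k mod n)%nat). assert (Hr : (r < n)%nat) by (apply Nat.mod_upper_bound, n_pos).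
  exists (firstn r pi), (skipn (S r) pi). split.
  rewrite pw_mod. fold r. rewrite pw_small by auto. apply split_nth; auto.
  rewrite traj_mod. fold r. apply traj_firstn. lia. Qed.
End Traj.

Open Scope nat_scope.

Definition cnt (b : bool) (l : word) : nat := count_occ Bool.bool_dec l b.

Lemma cnt_app b l1 l2 : cnt b (l1 ++ l2) = (cnt b l1 + cnt b l2)%nat.
Proof. apply count_occ_app. Qed.

Lemma cnt_rep_same b n : cnt b (repeat b n) = n.
Proof. unfold cnt. induction n; simpl; auto. destruct (bool_dec b b); [|congruence]. auto. Qed.
Lemma cnt_rep_diff b c n : b <> c -> cnt b (repeat c n) = 0%nat.
Proof. intros H. unfold cnt. induction n; simpl; auto. destruct (bool_dec c b); [congruence|]. auto. Qed.
Lemma cnt_cons b c l : cnt b (c :: l) = ((if bool_dec c b then 1 else 0) + cnt b l)%nat.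
Proof. unfold cnt. simpl. destruct (bool_dec c b); auto. Qed.

Lemma cnt_Lp p x :
  cnt false (Lp p x) = (S p * cnt false x + p * cnt true x)%nat /\
  cnt true (Lp p x) = (cnt false x + cnt true x)%nat.
Proof. induction x as [|c x [IH1 IH2]]. unfold cnt; simpl. lia.
  change (Lp p (c :: x)) with (Lp_letter p c ++ Lp p x).
  rewrite !cnt_app, IH1, IH2, !(cnt_cons _ c x).
  destruct c; unfold Lp_letter; rewrite !cnt_app;
  rewrite ?cnt_rep_same, ?cnt_rep_diff by congruence;
  unfold cnt; simpl; lia. Qed.

Lemma cnt_Rp p x :
  cnt false (Rp p x) = (cnt false x + cnt true x)%nat /\
  cnt true (Rp p x) = (p * cnt false x + S p * cnt true x)%nat.
Proof. induction x as [|c x [IH1 IH2]]. unfold cnt; simpl. lia.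
  change (Rp p (c :: x)) with (Rp_letter p c ++ Rp p x).
  rewrite !cnt_app, IH1, IH2, !(cnt_cons _ c x).
  destruct c; unfold Rp_letter; rewrite !cnt_cons;
  rewrite ?cnt_rep_same, ?cnt_rep_diff by congruence;
  simpl; lia. Qed.

Lemma valid_gcd x : valid x -> Nat.gcd (cnt false x) (cnt true x) = 1%nat.
Proof. intros H; induction H.
  - reflexivity.
  - reflexivity.
  - destruct (cnt_Lp p w) as [E1 E2]. rewrite E1, E2.
    set (a := cnt false w) in *. set (b := cnt true w) in *.
    replace (S p * a + p * b)%nat with (a + p * (a + b))%nat by lia.
    rewrite Nat.gcd_comm, Nat.gcd_add_mult_diag_r, Nat.gcd_comm.
    replace (a + b)%nat with (b + a)%nat by lia. rewrite Nat.gcd_add_diag_r. auto.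
  - destruct (cnt_Rp p w) as [E1 E2]. rewrite E1, E2.
    set (a := cnt false w) in *. set (b := cnt true w) in *.
    replace (p * a + S p * b)%nat with (b + p * (a + b))%nat by lia.
    rewrite Nat.gcd_add_mult_diag_r. rewrite Nat.gcd_comm.
    rewrite Nat.gcd_add_diag_r, Nat.gcd_comm. auto.
Qed.

Lemma length_concat_rep {A} (u : list A) q : length (concat (repeat u q)) = (q * length u)%nat.
Proof. induction q; simpl; auto. rewrite length_app, IHq. lia. Qed.

Lemma nth_concat_rep {A} (u : list A) e q i d : length u = e -> (0 < e)%nat -> (i < q * e)%nat ->
  nth i (concat (repeat u q)) d = nth (i mod e) u d.
Proof. intros He Hpos. revert i. induction q; intros i Hi; simpl in *. lia.
  destruct (Nat.lt_ge_cases i e).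
  - rewrite app_nth1 by lia. rewrite Nat.mod_small; auto.
  - rewrite app_nth2 by lia. rewrite He, IHq by lia.
    f_equal. replace i with ((i - e) + 1 * e)%nat at 2 by lia. now rewrite Nat.Div0.mod_add. Qed.

Lemma cnt_concat_rep b u q : cnt b (concat (repeat u q)) = (q * cnt b u)%nat.
Proof. induction q; simpl; auto. rewrite cnt_app, IHq. lia. Qed.

Lemma no_small_period pi : valid pi -> forall m, (0 < m)%nat -> (m < length pi)%nat ->
  (forall k, pw pi (k + m) = pw pi k) -> False.
Proof. intros Hv m Hm Hmn Hper.
  set (n := length pi) in *.
  assert (Hpi : pi <> []) by (intros E; unfold n in Hmn; rewrite E in Hmn; simpl in Hmn; lia).
  assert (Hpern : forall k, pw pi (k + n) = pw pi k) by (intros; apply pw_per).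
  assert (Hmult : forall d, (forall k, pw pi (k + d) = pw pi k) -> forall j k, pw pi (k + j * d) = pw pi k).
  { intros d Hd j. induction j; intros k. now rewrite Nat.add_0_r.
    replace (k + S j * d)%nat with ((k + j * d) + d)%nat by lia. now rewrite Hd. }
  assert (Hred : forall d, (0 < d)%nat -> (forall k, pw pi (k + d) = pw pi k) ->
    exists e, (0 < e <= d)%nat /\ (forall k, pw pi (k + e) = pw pi k) /\ (n mod e = 0)%nat).
  { intros d. induction d as [d IH] using lt_wf_ind. intros Hd Hpd.
    destruct (Nat.eq_dec (n mod d) 0) as [H0|H0].
    - exists d. split; [lia|]. split; auto.
    - assert (Hr : (n mod d < d)%nat) by (apply Nat.mod_upper_bound; lia).
      destruct (IH (n mod d) Hr ltac:(lia)) as [e [He1 [He2 He3]]].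
      + intros k. pose proof (Nat.div_mod_eq n d).
        rewrite <- (Hmult d Hpd (n / d)%nat (k + n mod d)%nat).
        replace (k + n mod d + n / d * d)%nat with (k + n)%nat by lia. apply Hpern.
      + exists e. split; [lia|]. split; auto. }
  destruct (Hred m Hm Hper) as [e [[He0 Hem] [Hpe Hne]]].
  set (q := (n / e)%nat).
  assert (Hnq : n = (q * e)%nat) by (pose proof (Nat.div_mod_eq n e); unfold q; lia).
  assert (Hq : (2 <= q)%nat) by (destruct q as [|[|q']]; lia).
  set (u := firstn e pi).
  assert (Hu : length u = e) by (unfold u; rewrite length_firstn; lia).
  assert (Hpi_eq : pi = concat (repeat u q)).
  { apply nth_ext with (d := false) (d' := false).
    rewrite length_concat_rep, Hu. fold n. auto.
    intros i Hi. fold n in Hi.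
    rewrite (nth_concat_rep u e) by lia.
    unfold u. rewrite nth_firstn.
    assert (Hie : (i mod e < e)%nat) by (apply Nat.mod_upper_bound; lia).
    destruct (Nat.ltb_spec (i mod e) e); [|lia].
    rewrite <- (pw_small pi i) by auto.
    rewrite <- (pw_small pi (i mod e)) by lia.
    pose proof (Nat.div_mod_eq i e).
    rewrite <- (Hmult e Hpe (i / e)%nat (i mod e)). f_equal. lia. }
  pose proof (valid_gcd pi Hv) as Hg.
  rewrite Hpi_eq, !cnt_concat_rep in Hg.
  assert (Nat.divide q 1).
  { rewrite <- Hg. apply Nat.gcd_greatest; [exists (cnt false u)|exists (cnt true u)]; lia. }
  apply Nat.divide_pos_le in H; lia.
Qed.

Open Scope R_scope.

Section Main.
#[local] Set Default Proof Using "All".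
Variables (I : R -> Prop) (phi0 phi1 : R -> R) (y0 y1 : R).
Hypothesis HI : is_interval I.
Hypothesis HA : A2 I phi0 phi1 y0 y1.
Notation P := (phiw phi0 phi1).
Notation o := (orbit phi0 phi1).
Let JI := J_I I phi0 phi1 y0 y1 HI HA.
Let PJ := P_J I phi0 phi1 y0 y1 HI HA.
Let PI := P_in I phi0 phi1 y0 y1 HI HA.
Let Ple := P_le I phi0 phi1 y0 y1 HI HA.
Let Plt := P_lt I phi0 phi1 y0 y1 HI HA.
Let Hy := y1y0 I phi0 phi1 y0 y1 HI HA.

Lemma orbit_S x k : o x (S k) = if Rle_dec x (o x k) then phi1 (o x k) else phi0 (o x k).
Proof. reflexivity. Qed.

Lemma orbit_I x : I x -> forall k, I (o x k).
Proof. intros Hx k. induction k. apply (f_in I phi0 phi1 y0 y1 HI HA true); auto.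
  rewrite orbit_S. destruct Rle_dec; [apply (f_in I phi0 phi1 y0 y1 HI HA true)|apply (f_in I phi0 phi1 y0 y1 HI HA false)]; auto. Qed.

Lemma orbit_J x : J y0 y1 x -> forall k, J y0 y1 (o x k).
Proof. intros Hx k. induction k. apply (phi1_J I phi0 phi1 y0 y1 HI HA); auto.
  rewrite orbit_S. destruct Rle_dec; [apply (phi1_J I phi0 phi1 y0 y1 HI HA)|apply (phi0_J I phi0 phi1 y0 y1 HI HA)]; auto. Qed.

Lemma nth_single_false k : nth k [false] false = false.
Proof. destruct k as [|[|k]]; reflexivity. Qed.
Lemma nth_single_true k : nth (k mod 1) [true] false = true.
Proof. rewrite Nat.mod_1_r. reflexivity. Qed.

Lemma part2 x : I x -> y0 <= x -> threshold_word phi0 phi1 x [false].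
Proof. intros Hx Hxy. split; [discriminate|split].
  - assert (H : forall k, o x k < x).
    { assert (Hp0 : phi0 x <= x).
      { destruct Hxy as [Hlt|Heq]. pose proof (f_contr I phi0 phi1 y0 y1 HI HA false y0 x (I_y0 I phi0 phi1 y0 y1 HI HA) Hx Hlt).
        simpl in H. rewrite (fix0 I phi0 phi1 y0 y1 HI HA) in H. lra. rewrite <- Heq, (fix0 I phi0 phi1 y0 y1 HI HA). lra. }
      induction k. simpl. apply (phi1_lt I phi0 phi1 y0 y1 HI HA); auto. lra.
      rewrite orbit_S. destruct Rle_dec. lra.
      pose proof (Plt [false] _ _ (orbit_I x Hx k) Hx IHk). simpl in H. lra. }
    intros k. rewrite orbit_S. rewrite nth_single_false. destruct Rle_dec; [|reflexivity].
    specialize (H k). lra.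
  - intros pi' Hne _. destruct pi'; [congruence|]. simpl. lia.
Qed.

Lemma part3 x : I x -> x <= y1 -> threshold_word phi0 phi1 x [true].
Proof. intros Hx Hxy. split; [discriminate|split].
  - assert (Hp1 : x <= phi1 x).
    { destruct Hxy as [Hlt|Heq]. pose proof (f_contr I phi0 phi1 y0 y1 HI HA true x y1 Hx (I_y1 I phi0 phi1 y0 y1 HI HA) Hlt).
      simpl in H. rewrite (fix1 I phi0 phi1 y0 y1 HI HA) in H. lra. rewrite Heq, (fix1 I phi0 phi1 y0 y1 HI HA). lra. }
    assert (H : forall k, x <= o x k).
    { induction k. simpl. auto.
      rewrite orbit_S. destruct Rle_dec; [|lra].
      pose proof (Ple [true] _ _ Hx (orbit_I x Hx k) r). simpl in H. lra. }
    intros k. rewrite orbit_S. rewrite nth_single_true. destruct Rle_dec; [reflexivity|].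
    specialize (H k). lra.
  - intros pi' Hne _. destruct pi'; [congruence|]. simpl. lia.
Qed.

Lemma dec_letters x pi k : J y0 y1 x ->
  o x (S k) = phik phi0 phi1 (pw pi k) (o x k) ->
  (pw pi k = true -> x <= o x k) /\ (pw pi k = false -> o x k < x).
Proof. intros Jx H. rewrite orbit_S in H. pose proof (orbit_J x Jx k) as Jo.
  pose proof (phi0_ne_phi1 I phi0 phi1 y0 y1 HI HA _ Jo).
  destruct Rle_dec; destruct (pw pi k); simpl in H; split; intros; try congruence; try lra.
Qed.

Lemma part1 w a b x : valid (false :: w ++ [true]) ->
  is_fixpt I phi0 phi1 ([false; true] ++ w) a ->
  is_fixpt I phi0 phi1 ([true; false] ++ w) b -> I x ->
  (threshold_word phi0 phi1 x (false :: w ++ [true]) <-> a <= x <= b).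
Proof. intros Hv [Ia Fa] [Ib Fb] Ix. change ([false; true] ++ w) with (false :: true :: w) in Fa. change ([true; false] ++ w) with (true :: false :: w) in Fb.
  set (pi := false :: w ++ [true]) in *.
  assert (Hpi : pi <> []) by discriminate.
  assert (Hn : length pi = (length w + 2)%nat) by (unfold pi; simpl; rewrite length_app; simpl; lia).
  destruct (Inv_valid I HI pi Hv w eq_refl phi0 phi1 y0 y1 HA a b Ia Ib Fa Fb) as [Hab [HOa Hbd]].
  assert (Jb : J y0 y1 b) by (eapply (fix_J I phi0 phi1 y0 y1 HI HA); [|exact Ib|exact Fb]; discriminate).
  assert (Ja : J y0 y1 a) by (eapply (fix_J I phi0 phi1 y0 y1 HI HA); [|exact Ia|exact Fa]; discriminate).
  assert (Fpi : P pi (phi1 b) = phi1 b).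
  { unfold pi. change (false :: w ++ [true]) with ((false :: w) ++ [true]). rewrite phiw_app.
    change (P (false :: w) (phi1 b)) with (P (true :: false :: w) b). rewrite Fb. reflexivity. }
  assert (OrbConv : forall z c, Orb phi0 phi1 pi (phi1 b) z c -> Orb phi0 phi1 (true :: false :: w) b z c).
  { intros z c H. unfold pi in H. change (false :: w ++ [true]) with ((false :: w) ++ [true]) in H.
    apply Orb_rot in H; [|exact Fpi]. change (P (false :: w) (phi1 b)) with (P (true :: false :: w) b) in H.
    rewrite Fb in H. exact H. }
  set (e := traj phi0 phi1 (pw pi) (phi1 b)).
  assert (Oe : forall k, Orb phi0 phi1 pi (phi1 b) (e k) (pw pi k)) by (intros; apply Orb_traj; auto).
  assert (Je : forall k, J y0 y1 (e k)).
  { intros k. apply (Orb_J I phi0 phi1 y0 y1 HI HA pi (phi1 b) _ (pw pi k)); auto.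
    apply (phi1_J I phi0 phi1 y0 y1 HI HA); auto. }
  assert (Jphi1b : J y0 y1 (phi1 b)) by (apply (phi1_J I phi0 phi1 y0 y1 HI HA); auto).
  split.
  -
    intros [_ [Hfol Hmin]].
    assert (Jx : J y0 y1 x).
    { split.
      - destruct (Rle_lt_dec y1 x); auto. exfalso.
        destruct (part3 x Ix ltac:(lra)) as [_ [Hf _]]. specialize (Hmin [true] ltac:(discriminate) Hf).
        rewrite Hn in Hmin. simpl in Hmin. lia.
      - destruct (Rle_lt_dec x y0); auto. exfalso.
        destruct (part2 x Ix ltac:(lra)) as [_ [Hf _]]. specialize (Hmin [false] ltac:(discriminate) Hf).
        rewrite Hn in Hmin. simpl in Hmin. lia. }
    assert (D : forall k, (pw pi k = true -> x <= o x k) /\ (pw pi k = false -> o x k < x)).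
    { intros k. apply dec_letters; auto. }
    assert (Ot : forall k, o x k = traj phi0 phi1 (pw pi) (phi1 x) k).
    { induction k. reflexivity. rewrite Hfol. simpl. rewrite IHk. reflexivity. }
    split.
    +
      destruct (Orb_rot phi0 phi1 [true] (false :: w) b a false Fb HOa) as [s [t [Hs Ha]]].
      simpl phiw in Ha. change ((false :: w) ++ [true]) with pi in Hs.
      set (r := length s).
      assert (Hr : (r < length pi)%nat) by (rewrite Hs, length_app; simpl; unfold r; lia).
      assert (Hpr : pw pi r = false) by (rewrite pw_small by auto; rewrite Hs; apply nth_middle).
      assert (Hea : e r = a).
      { unfold e. rewrite traj_firstn by lia. rewrite Hs. unfold r.
        rewrite <- (Nat.add_0_r (length s)), firstn_app_2. simpl. rewrite app_nil_r. auto. }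
      set (n := length pi) in *.
      set (wd := map (fun i => pw pi (r + i)) (seq 0 n)).
      assert (Hwd : wd <> []) by (unfold wd; destruct n; [lia|]; simpl; discriminate).
      set (G := P wd).
      assert (Gshift : forall z0 k, traj phi0 phi1 (pw pi) z0 (r + k * n + n) = G (traj phi0 phi1 (pw pi) z0 (r + k * n))).
      { intros z0 k. rewrite traj_shift. unfold G, wd. rewrite <- traj_phiw. apply traj_ext.
        intros i _. replace (r + k * n + i)%nat with (r + i + k * n)%nat by lia. apply pw_perq. }
      assert (HGa : G a = a).
      { rewrite <- Hea. unfold e. pose proof (Gshift (phi1 b) 0%nat). rewrite Nat.mul_0_l, Nat.add_0_r in H.
        rewrite <- H. apply traj_per; auto. }
      destruct (Rle_lt_dec a x) as [Hax|Hxa]; auto. exfalso.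
      assert (HGx : x < G x).
      { pose proof (P_contr_lt I phi0 phi1 y0 y1 HI HA wd x a Hwd Ix Ia Hxa). fold G in H. lra. }
      set (delta := G x - x).
      assert (Hlow : forall z, I z -> z <= x -> z + delta <= G z).
      { intros z Iz Hzx. pose proof (P_contr_le I phi0 phi1 y0 y1 HI HA wd z x Iz Ix Hzx). fold G in H.
        unfold delta. lra. }
      assert (Hneg : forall j, o x (r + j * n) < x).
      { intros j. apply D. rewrite pw_perq. auto. }
      assert (Hgrow : forall j, o x r + INR j * delta <= o x (r + j * n)).
      { induction j. simpl. rewrite Nat.add_0_r. lra.
        replace (r + S j * n)%nat with (r + j * n + n)%nat by lia.
        rewrite !Ot in *. rewrite Gshift. rewrite S_INR.
        pose proof (Hlow _ (orbit_I x Ix (r + j * n)) (Rlt_le _ _ (Hneg j))). rewrite Ot in H. lra. }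
      destruct (INR_archimed delta (x - o x r) ltac:(unfold delta; lra)) as [j Hj].
      specialize (Hgrow j). specialize (Hneg j). lra.
    +
      set (k := S (length w)).
      assert (Hk : pw pi k = true).
      { rewrite pw_small by lia. unfold pi, k. simpl. rewrite app_nth2 by lia. rewrite Nat.sub_diag. reflexivity. }
      pose proof (proj1 (D k) Hk) as H. rewrite Ot in H.
      rewrite traj_firstn in H by lia.
      assert (firstn k pi = false :: w).
      { unfold pi, k. rewrite firstn_cons. f_equal. rewrite <- (Nat.add_0_r (length w)), firstn_app_2. simpl. apply app_nil_r. }
      rewrite H0 in H. change (P (false :: w) (phi1 x)) with (P (true :: false :: w) x) in H.
      apply (below_fix I phi0 phi1 y0 y1 HI HA (true :: false :: w) x b); auto. discriminate.
  -
    intros [Hax Hxb].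
    assert (Jx : J y0 y1 x) by (unfold J in *; lra).
    assert (Ie : forall k, I (e k)) by (intros; apply JI; auto).
    assert (Hdec : forall k, o x k <= e k -> e k - o x k <= b - x -> (x < b -> o x k < e k) ->
                    o x (S k) = phik phi0 phi1 (pw pi k) (o x k)).
    { intros k H1 H2 H3. rewrite orbit_S.
      destruct (Hbd (e k) (pw pi k) (OrbConv _ _ (Oe k))) as [B0 [B1 _]].
      destruct (pw pi k) eqn:Ep.
      - destruct Rle_dec; [reflexivity|]. exfalso. specialize (B1 eq_refl). lra.
      - destruct Rle_dec; [|reflexivity]. exfalso. specialize (B0 eq_refl).
        destruct (Rle_lt_dec b x). assert (x = b) by lra. subst x. lra.
        specialize (H3 r0). lra. }
    assert (Q : forall k, o x k <= e k /\ e k - o x k <= b - x /\ (x < b -> o x k < e k) /\ I (o x k)).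
    { induction k as [|k [H1 [H2 [H3 H4]]]].
      - simpl. unfold e. simpl. split; [|split; [|split]].
        + apply (Ple [true]); auto.
        + pose proof (P_contr_le I phi0 phi1 y0 y1 HI HA [true] x b Ix Ib Hxb). simpl in H. lra.
        + intros. apply (Plt [true]); auto.
        + apply (f_in I phi0 phi1 y0 y1 HI HA true); auto.
      - rewrite (Hdec k H1 H2 H3).
        assert (Hek : e (S k) = phik phi0 phi1 (pw pi k) (e k)) by reflexivity.
        rewrite Hek. split; [|split; [|split]].
        + apply (Ple [pw pi k]); auto.
        + pose proof (P_contr_le I phi0 phi1 y0 y1 HI HA [pw pi k] _ _ H4 (Ie k) H1). simpl in H. lra.
        + intros. apply (Plt [pw pi k]); auto.
        + apply (f_in I phi0 phi1 y0 y1 HI HA); auto. }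
    assert (Hfol : follows phi0 phi1 x pi).
    { intros k. destruct (Q k) as [H1 [H2 [H3 _]]]. apply Hdec; auto. }
    split; [discriminate|split; auto].
    intros pi' Hne' Hfol'.
    destruct (Nat.lt_ge_cases (length pi') (length pi)) as [Hlt|Hge]; auto. exfalso.
    assert (Heq : forall k, pw pi' k = pw pi k).
    { intros k. specialize (Hfol k). specialize (Hfol' k). fold (pw pi k) in Hfol. fold (pw pi' k) in Hfol'.
      rewrite Hfol in Hfol'. pose proof (orbit_J x Jx k) as Jo.
      pose proof (phi0_ne_phi1 I phi0 phi1 y0 y1 HI HA _ Jo).
      destruct (pw pi k), (pw pi' k); simpl in Hfol'; auto; congruence. }
    apply (no_small_period pi Hv (length pi')).
    destruct pi'; [congruence|simpl; lia]. auto.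
    intros k. rewrite <- !Heq. apply pw_per.
Qed.
End Main.

Theorem proposition2 (I : R -> Prop) (phi0 phi1 : R -> R) (y0 y1 : R)
  (HI : is_interval I) (HA2 : A2 I phi0 phi1 y0 y1) :
  (forall (w : word) (a b x : R),
      valid (false :: w ++ [true]) ->
      is_fixpt I phi0 phi1 ([false; true] ++ w) a ->
      is_fixpt I phi0 phi1 ([true; false] ++ w) b ->
      I x ->
      (threshold_word phi0 phi1 x (false :: w ++ [true]) <-> a <= x <= b)) /\
  (forall x, I x -> y0 <= x -> threshold_word phi0 phi1 x [false]) /\
  (forall x, I x -> x <= y1 -> threshold_word phi0 phi1 x [true]).
Proof.
  split; [|split].
  - intros w a b x. apply (part1 I phi0 phi1 y0 y1 HI HA2).
  - intros x. apply (part2 I phi0 phi1 y0 y1 HI HA2).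
  - intros x. apply (part3 I phi0 phi1 y0 y1 HI HA2).
Qed.
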